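(* A finite Dedekind group is code-perfect if and only if it is isomorphic to either $\mathbb{Z}_4$ or $\mathbb{Z}_2^t\times Q$, where $t\ge 0$ and $Q$ is an abelian group of odd order.
   Context: A Dedekind group is a group all of whose subgroups are normal. For a normal subgroup $H$ of a finite group $G$ with identity $e$, the subgroup sum graph $\Gamma_{G,H}$ is the simple undirected graph with vertex set $G$ in which distinct vertices $x,y$ are adjacent if and only if $xy\in H\setminus\{e\}$. A perfect code in a graph is a set $C$ of vertices that is independent and such that every vertex not in $C$ is adjacent to exactly one vertex of $C$. A finite group $G$ is code-perfect if $\Gamma_{G,H}$ admits a perfect code for every normal subgroup $H$ of $G$. *)

(* Defs.v *)
From mathcomp Require Import all_boot all_order all_algebra all_fingroup all_solvable.
Set Implicit Arguments. Unset Strict Implicit. Unset Printing Implicit Defensive.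
Local Open Scope group_scope.

Definition dedekind (gT : finGroupType) (G : {set gT}) : Prop :=
  forall H : {group gT}, H \subset G -> H <| G.

(* Adjacency in the subgroup sum graph Gamma_{G,H} (vertex set G):
   distinct x, y are adjacent iff x*y \in H \ {1}. *)
Definition ssg_adj (gT : finGroupType) (H : {set gT}) (x y : gT) : bool :=
  (x != y) && (x * y \in H :\ 1).

Definition perfect_code (gT : finGroupType) (G H C : {set gT}) : Prop :=
  [/\ C \subset G,
      {in C &, forall x y, ~~ ssg_adj H x y}
    & {in G :\: C, forall x, #|[set y in C | ssg_adj H x y]| = 1%N}].

Definition code_perfect (gT : finGroupType) (G : {set gT}) : Prop :=
  forall H : {group gT}, H <| G -> exists C : {set gT}, perfect_code G H C.

(* Main.v *)
Require Import Defs.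
From mathcomp Require Import all_boot all_order all_algebra all_fingroup all_solvable.
From mathcomp Require Import zify.
Set Implicit Arguments. Unset Strict Implicit. Unset Printing Implicit Defensive.
Local Open Scope group_scope.


Definition cond (gT : finGroupType) (G H : {set gT}) :=
  forall x, x \in G -> x ^+ 2 \in H ->
    #|H| <= 2 \/ exists2 h, h \in H & (x * h) ^+ 2 = 1.

Section Suff.
Variables (gT : finGroupType) (G H : {group gT}).
Hypothesis nHG : H <| G.

Lemma inN x : x \in G -> x \in 'N(H).
Proof. exact: (subsetP (normal_norm nHG)). Qed.

Lemma fM x y : x \in G -> y \in G -> coset H (x * y) = coset H x * coset H y.
Proof. by move=> Gx Gy; rewrite morphM ?inN. Qed.

Lemma fV x : x \in G -> coset H x^-1 = (coset H x)^-1.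
Proof. by move=> Gx; rewrite morphV ?inN. Qed.

Lemma fH x : x \in G -> (x \in H) = (coset H x == 1).
Proof.
move=> Gx; apply/idP/eqP; first exact: coset_id.
exact: coset_idr (inN Gx).
Qed.

Lemma mulH x y : x \in G -> y \in G ->
  (x * y \in H) = (coset H y == (coset H x)^-1).
Proof.
by move=> Gx Gy; rewrite fH ?groupM // fM // -eq_invg_mul eq_sym.
Qed.

Lemma adjE x y : x \in G -> y \in G ->
  ssg_adj H x y = [&& x != y, x != y^-1 & coset H y == (coset H x)^-1].
Proof.
move=> Gx Gy; rewrite /ssg_adj !inE mulH // mulg_eq1.
by case: (x != y); case: (x == y^-1).
Qed.
Hypothesis condH : cond G H.

Definition S x := [set z in G | (coset H z == coset H x) || (coset H z == (coset H x)^-1)].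
Definition r (A : {set gT}) :=
  if [pick z in A | z ^+ 2 == 1] is Some z then z else repr A.
Definition C := [set y in G | (y == r (S y)) || (y^-1 == r (S y))].

Lemma S_self x : x \in G -> x \in S x.
Proof. by move=> Gx; rewrite inE Gx eqxx. Qed.

Lemma S_G x z : z \in S x -> z \in G.
Proof. by rewrite inE => /andP[]. Qed.

Lemma S_eq x z : z \in S x -> S z = S x.
Proof.
rewrite inE => /andP[Gz /orP[/eqP e|/eqP e]]; apply/setP=> w; rewrite !inE e //.
by rewrite invgK orbC.
Qed.

Lemma S_inv x z : z \in S x -> z^-1 \in S x.
Proof.
rewrite !inE => /andP[Gz e]; rewrite groupV Gz fV //=.
rewrite !eqg_invLR invgK; by rewrite orbC.
Qed.

Lemma r_in (A : {set gT}) x : x \in A -> r A \in A.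
Proof. by rewrite /r; case: pickP => [z /andP[]|_] // /mem_repr. Qed.

Lemma r_inv (A : {set gT}) : (exists2 z, z \in A & z ^+ 2 = 1) -> (r A) ^+ 2 = 1.
Proof.
case=> z Az z2; rewrite /r; case: pickP => [y /andP[_ /eqP]|/(_ z)] //.
by rewrite Az z2 eqxx.
Qed.

Section Point.
Variable x : gT.
Hypothesis Gx : x \in G.

Lemma r0_S : (r (S x)) \in S x. Proof. exact: r_in (S_self Gx). Qed.
Lemma r0_G : (r (S x)) \in G. Proof. exact: S_G r0_S. Qed.
Lemma r0_C : (r (S x)) \in C.
Proof. by rewrite inE r0_G (S_eq r0_S) eqxx. Qed.
Lemma r0V_C : (r (S x))^-1 \in C.
Proof. by rewrite inE groupV r0_G (S_eq (S_inv r0_S)) invgK eqxx orbT. Qed.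
Lemma C_S y : y \in C -> y \in S x -> y = (r (S x)) \/ y = (r (S x))^-1.
Proof.
rewrite inE => /andP[_] + yS; rewrite (S_eq yS) => /orP[/eqP->|/eqP<-].
  by left. by right; rewrite invgK.
Qed.
End Point.

Lemma C_indep : {in C &, forall y1 y2, ~~ ssg_adj H y1 y2}.
Proof.
move=> y1 y2 C1 C2; have G1 : y1 \in G by move: C1; rewrite inE => /andP[].
have G2 : y2 \in G by move: C2; rewrite inE => /andP[].
rewrite adjE //; apply/negP => /and3P[ne neV e].
have y2S : y2 \in S y1 by rewrite inE G2 e orbT.
have [e1|e1] := C_S C1 (S_self G1); have [e2|e2] := C_S C2 y2S;
  rewrite e1 e2 ?invgK eqxx ?orbT in ne neV => //.
Qed.

Lemma C_dom : {in G :\: C, forall x, #|[set y in C | ssg_adj H x y]| = 1%N}.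
Proof.
move=> x /setDP[Gx nCx].
have rS := r0_S Gx; have rG := r0_G Gx; have rC := r0_C Gx; have rVC := r0V_C Gx.
set r0 := r (S x) in rS rG rC rVC.
have xr : x != r0 by apply: contraNneq nCx => ->.
have xrV : x != r0^-1 by apply: contraNneq nCx => ->.
have K : x * r0 \in H -> x * r0^-1 \in H -> r0 = r0^-1.
  move=> h1 h2; case: (eqVneq r0 r0^-1) => [e|nr]; first exact: e; exfalso.
  rewrite mulH // in h1; rewrite mulH ?groupV // fV // in h2.
  have fr : coset H r0 = (coset H r0)^-1 by rewrite {1}(eqP h1) -(eqP h2).
  have r2H : r0 ^+ 2 \in H by rewrite expg2 mulH // -fr.
  case: (condH rG r2H) => [le2|[h Hh e]].
    have sub : 1 |: [set x * r0; x * r0^-1] \subset H.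
      apply/subsetP=> z; rewrite !inE => /or3P[] /eqP->; rewrite ?group1 //.
        by rewrite mulH // (eqP h1).
      by rewrite mulH ?groupV // fV // (eqP h1) -fr.
    have := subset_leq_card sub; rewrite cardsU1 cards2 !inE.
    rewrite (inj_eq (mulgI x)) nr eq_sym mulg_eq1 (negPf xrV) eq_sym mulg_eq1 invgK (negPf xr) /=.
    by move=> /leq_trans /(_ le2).
  have hG : h \in G by apply: (subsetP (normal_sub nHG)).
  have : (r (S x)) ^+ 2 = 1.
    apply: r_inv; exists (r0 * h) => //.
    move: (r0_S Gx); rewrite -/r0 !inE groupM //= fM // (coset_id Hh) mulg1.
    by rewrite rG.
  by move/eqP; rewrite expg2 mulg_eq1 -/r0 (negPf nr).
have fin s : s \in C -> ssg_adj H x s ->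
    (forall y, y \in C -> ssg_adj H x y -> y = s) ->
    #|[set y in C | ssg_adj H x y]| = 1%N.
  move=> sC adj uniq; suff -> : [set y in C | ssg_adj H x y] = [set s] by exact: cards1.
  apply/setP=> y.
  apply/setIdP/set1P => [[yC a]|->]; first exact: (uniq y yC a).
  by split.
have CG y : y \in C -> y \in G by rewrite inE => /andP[].
move: rS; rewrite inE => /andP[_ /orP[/eqP e|/eqP e]].
  apply: (fin r0^-1) => //; first by rewrite adjE ?groupV // invgK xr xrV fV // e eqxx.
  move=> y yC; have Gy := CG y yC; rewrite adjE // => /and3P[_ _ fy].
  have yS : y \in S x by rewrite inE Gy fy orbT.
  case: (C_S yC yS) => // ey; rewrite ey in fy *; apply: K.
    by rewrite mulH.
  by rewrite mulH ?groupV // fV // e.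
apply: (fin r0) => //; first by rewrite adjE // xr xrV e eqxx.
move=> y yC; have Gy := CG y yC; rewrite adjE // => /and3P[_ _ fy].
have yS : y \in S x by rewrite inE Gy fy orbT.
case: (C_S yC yS) => // ey; rewrite ey in fy *; apply: esym; apply: K; first by rewrite mulH // e.
by rewrite mulH ?groupV.
Qed.

Lemma suff_code : exists C0, perfect_code G H C0.
Proof.
exists C; split; [|exact: C_indep|exact: C_dom].
by apply/subsetP=> y; rewrite inE => /andP[].
Qed.
End Suff.


Lemma nec_cond (gT : finGroupType) (G H : {group gT}) (C0 : {set gT}) :
  H <| G -> perfect_code G H C0 -> cond G H.
Proof.
move=> nHG [sCG indep dom] x Gx x2H.
have sHG := normal_sub nHG.
case: (leqP #|H| 2) => [le|lt]; [by left|right].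
case: (boolP [exists h in H, (x * h) ^+ 2 == 1]) => [/exists_inP[h Hh /eqP e]|nE].
  by exists h.
exfalso.
set u := coset H x.
have noinv z : z \in G -> coset H z = u -> z ^+ 2 != 1.
  move=> Gz fz; apply/negP => /eqP z2; move/negP: nE; apply; apply/exists_inP.
  exists (x^-1 * z); last by rewrite mulKVg z2.
  by rewrite (fH nHG) ?groupM ?groupV // (fM nHG) ?groupV // (fV nHG) // fz mulVg.
have uu : u^-1 = u.
  by apply/eqP; rewrite /u eq_invg_mul -(fM nHG) // -expg2 -(fH nHG) // groupX.
have CG y : y \in C0 -> y \in G by move/(subsetP sCG).
have adj a b : a \in G -> b \in G -> coset H a = u -> coset H b = u ->
    a != b -> a != b^-1 -> ssg_adj H a b.
  by move=> Ga Gb fa fb ab abV; rewrite (adjE nHG) // ab abV fa fb uu eqxx.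
have [c cC fc] : exists2 c, c \in C0 & coset H c = u.
  case: (boolP (x \in C0)) => [xC|xnC]; first by exists x.
  have /eqP/cards1P[c ec] := dom x (introT setDP (conj Gx xnC)).
  have : c \in [set y in C0 | ssg_adj H x y] by rewrite ec set11.
  rewrite inE => /andP[cC]; rewrite (adjE nHG) ?(CG c cC) // => /and3P[_ _ /eqP fc].
  by exists c; rewrite // fc uu.
have Gc := CG c cC.
have fcV : coset H c^-1 = u by rewrite (fV nHG) // fc uu.
have ccV : c != c^-1.
  by apply: contraNneq (noinv c Gc fc) => e; rewrite expg2 {2}e mulgV.
case: (boolP (c^-1 \in C0)) => [cVC|cVnC].
  have : ~~ (H \subset [set 1; c^-1 ^+ 2]).
    apply/negP => /subset_leq_card; rewrite cards2.
    by move=> /(leq_trans lt); case: (_ != _).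
  case/subsetPn => h Hh; rewrite !inE negb_or => /andP[h1 hc].
  have Gh := subsetP sHG h Hh.
  set z := c * h.
  have Gz : z \in G by rewrite groupM.
  have fz : coset H z = u by rewrite (fM nHG) // (coset_id Hh) mulg1.
  have zc : z != c by rewrite /z -{2}(mulg1 c) (inj_eq (mulgI c)).
  have zcV : z != c^-1.
    apply: contraNneq hc => e; apply/eqP.
    by rewrite expg2 -{2}e /z mulKg.
  have zC : z \notin C0.
    by apply/negP => zC; move: (indep z c zC cC); rewrite adj // invgK eq_sym.
  have := dom z (introT setDP (conj Gz zC)).
  have sub : [set c; c^-1] \subset [set y in C0 | ssg_adj H z y].
    apply/subsetP => y; rewrite !inE => /orP[] /eqP->.
      by rewrite cC adj.
    by rewrite cVC adj ?groupV // invgK.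
  by move/subset_leq_card: sub; rewrite cards2 ccV => /[swap] ->.
have := dom c^-1 (introT setDP (conj (groupVr Gc) cVnC)).
move/eqP/cards1P => [d ed].
have : d \in [set y in C0 | ssg_adj H c^-1 y] by rewrite ed set11.
rewrite inE => /andP[dC]; have Gd := CG d dC.
rewrite (adjE nHG) ?groupV // => /and3P[cd cdV /eqP fd].
rewrite (fV nHG) // fc invgK in fd.
move: (indep d c dC cC); rewrite adj //.
  by apply: contraNneq cdV => ->.
by rewrite eq_sym.
Qed.


Lemma cond_exp (gT : finGroupType) (G H : {group gT}) m :
  odd m -> (forall x, x \in G -> x ^+ (2 * m) = 1) -> cond G H.
Proof.
move=> om ex x Gx x2H; right; exists ((x ^+ 2) ^+ m./2); first by rewrite groupX.
have -> : x * (x ^+ 2) ^+ m./2 = x ^+ m.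
  rewrite -expgM -expgS; congr (x ^+ _).
  by rewrite -{2}(odd_double_half m) om mul2n.
by rewrite -expgM mulnC ex.
Qed.

Lemma cond_4 (gT : finGroupType) (G H : {group gT}) :
  #|G| = 4 -> H \subset G -> cond G H.
Proof.
move=> cG sHG x Gx _; case: (leqP #|H| 2) => [|lt]; [by left|right].
have dH : #|H| %| 4 by rewrite -cG cardSg.
have eH : #|H| = 4.
  have le := dvdn_leq (isT : 0 < 4) dH.
  by move: dH lt le; case: #|H| => [|[|[|[|[|n]]]]].
have HG : H :=: G by apply/eqP; rewrite eqEcard sHG cG eH leqnn.
by exists x^-1; rewrite ?HG ?groupV // mulgV expg1n.
Qed.

Lemma rV2_exp t : exponent [set: 'rV['Z_2]_t] %| 2.
Proof.
apply/exponentP => v _; rewrite FinRing.zmodXgE; apply/matrixP => i j.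
by rewrite mulmxnE !mxE -GRing.mulr_natr pchar_Zp // GRing.mulr0.
Qed.

Lemma transfer_X (gT : finGroupType) (G : {group gT}) t (qT : finGroupType)
  (Q : {group qT}) : odd #|Q| -> G \isog setX [set: 'rV['Z_2]_t] Q ->
  forall x, x \in G -> x ^+ (2 * #|Q|) = 1.
Proof.
move=> oQ iso x Gx; apply/eqP; rewrite -order_dvdn.
apply: dvdn_trans (dvdn_exponent Gx) _.
have iso' : G \isog (setX_group [set: 'rV['Z_2]_t]%G Q) by [].
rewrite (exponent_isog iso').
rewrite -(dprod_exponent (setX_dprod [set: 'rV['Z_2]_t]%G Q)) dvdn_lcm.
apply/andP; split.
  rewrite -(exponent_isog (isog_setX1 _ [set: 'rV['Z_2]_t]%G)).
  exact: dvdn_trans (rV2_exp t) (dvdn_mulr _ _).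
rewrite -(exponent_isog (isog_set1X _ Q)).
exact: dvdn_trans (exponent_dvdn Q) (dvdn_mull _ _).
Qed.


Lemma card3 (T : finType) (A : {set T}) a b c :
  a \in A -> b \in A -> c \in A -> a != b -> a != c -> b != c -> 2 < #|A|.
Proof.
move=> Aa Ab Ac ab ac bc.
have sub : a |: [set b; c] \subset A.
  by apply/subsetP => z; rewrite !inE => /or3P[] /eqP->.
apply: leq_trans (subset_leq_card sub).
by rewrite cardsU1 cards2 !inE negb_or ab ac bc.
Qed.

Lemma commute_cyc (gT : finGroupType) (a b : gT) : a \in <[b]> -> commute a b.
Proof. by case/cycleP => i ->; apply: commute_sym; apply: commuteX. Qed.

Lemma commute_cyc2 (gT : finGroupType) (a d b : gT) :
  a \in <[b]> -> d \in <[b]> -> commute a d.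
Proof. by case/cycleP => i -> /cycleP[j ->]; apply: commuteX2. Qed.

Lemma A1 e : 2 %| e -> 4 %| (e * 2)%N. Proof. lia. Qed.
Lemma A2 p : p <= 2 -> 1 < p -> p == 2. Proof. lia. Qed.
Lemma A3 a b c : a <= c -> b = c.+1 -> b <= a -> False. Proof. lia. Qed.
Lemma A5 a e p : a <= e -> 1 < p -> 0 < e -> a < (e * p)%N. Proof. nia. Qed.

Section GT.
Variables (gT : finGroupType) (G : {group gT}).
Hypothesis dG : dedekind G.
Hypothesis cG : forall H : {group gT}, H \subset G -> cond G H.

Lemma comm_in x y : x \in G -> y \in G -> [~ x, y] \in <[x]> :&: <[y]>.
Proof.
move=> Gx Gy.
have nx : y \in 'N(<[x]>).
  by apply: (subsetP (normal_norm (dG _))); rewrite ?cycle_subG.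
have ny : x \in 'N(<[y]>).
  by apply: (subsetP (normal_norm (dG _))); rewrite ?cycle_subG.
rewrite inE; apply/andP; split.
  by rewrite commgEl groupM ?groupV ?cycle_id // memJ_norm // cycle_id.
by rewrite commgEr groupM ?cycle_id // memJ_norm // groupV cycle_id.
Qed.

Lemma ord4 x : x \in G -> 4 %| #[x] -> #[x] = 4.
Proof.
move=> Gx d4.
have sHG : <[x ^+ 2]> \subset G by rewrite cycle_subG groupX.
have xp := order_gt0 x.
case: (cG sHG Gx (cycle_id _)) => [le|[h /cycleP[i ->] e]].
  have d2 : 2 %| #[x] by apply: dvdn_trans d4.
  move: le; rewrite -orderE (orderXdiv d2); clear -d4 xp; lia.
have : #[x] %| 2 * (2 * i).+1.
  move: e; rewrite -expgM -expgS -expgM mulnC => e.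
  by rewrite order_dvdn e.
by move/(dvdn_trans d4); clear; lia.
Qed.

Section Four.
Variable x : gT.
Hypothesis Gx : x \in G.
Hypothesis ox : #[x] = 4.

Lemma x2n1 : x ^+ 2 != 1.
Proof. by rewrite -order_dvdn ox. Qed.

Lemma cyc4_inv y : y \in <[x]> -> y ^+ 2 = 1 -> y = 1 \/ y = x ^+ 2.
Proof.
case/cycleP => k ->; rewrite -(expg_mod_order x k) ox.
have : k %% 4 < 4 by rewrite ltn_mod.
case: (k %% 4) => [|[|[|[|n]]]] //= _ e.
- by left.
- by move: x2n1; rewrite -e expg1 eqxx.
- by right.
- have : x ^+ 6 = 1 by rewrite -e -expgM.
  by rewrite -(expg_mod_order x 6) ox /= => /eqP; rewrite (negPf x2n1).
Qed.

Lemma cyc4_sub z : z \in <[x]> -> z != 1 -> x ^+ 2 \in <[z]>.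
Proof.
case/cycleP => k ->; rewrite -(expg_mod_order x k) ox.
have : k %% 4 < 4 by rewrite ltn_mod.
case: (k %% 4) => [|[|[|[|n]]]] //= _.
- by rewrite expg0 eqxx.
- by rewrite expg1 mem_cycle.
- by rewrite cycle_id.
- move=> _; have -> : x ^+ 2 = (x ^+ 3) ^+ 2.
    by rewrite -expgM -(expg_mod_order x (3 * 2)) ox.
  by rewrite mem_cycle.
Qed.

Lemma claimA e : e \in G -> e != 1 -> <[e]> :&: <[x]> = 1 -> False.
Proof.
move=> Ge ne1 triv.
have cxe : commute x e.
  apply/commgP; have := comm_in Gx Ge; rewrite setIC triv => /set1P ->.
  by rewrite eqxx.
have ex : e \notin <[x]>.
  apply: contra ne1 => ex; have : e \in <[e]> :&: <[x]> by rewrite inE cycle_id ex.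
  by rewrite triv => /set1P ->.
have cent : <[x ^+ 2]> \subset 'C(<[e]>).
  rewrite cycle_subG; apply/centP => y /cycleP[j ->].
  exact: commuteX2 2 j cxe.
set H := (<[x ^+ 2]> <*> <[e]>)%G.
have sHG : H \subset G by rewrite join_subG !cycle_subG Ge groupX.
have HE : H :=: <[x ^+ 2]> * <[e]> by rewrite /= cent_joinEl.
have x2H : x ^+ 2 \in H.
  by rewrite HE; apply/mulsgP; exists (x ^+ 2) 1; rewrite ?cycle_id ?group1 ?mulg1.
case: (cG sHG Gx x2H) => [le|[h]].
  have eH : e \in H.
    by rewrite HE; apply/mulsgP; exists 1 e; rewrite ?cycle_id ?group1 ?mul1g.
  have := card3 (group1 H) x2H eH; rewrite eq_sym x2n1 eq_sym ne1.
  have -> : x ^+ 2 != e by apply: contraNneq ex => <-; rewrite mem_cycle.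
  by move=> /(_ isT isT isT); rewrite ltnNge le.
rewrite HE => /mulsgP[a b /cycleP[i ->] /cycleP[j ->] ->].
rewrite mulgA -expgM -expgS expgMn; last by apply: commuteX2.
move=> eq1.
have : x ^+ (2 * i).+1 ^+ 2 \in <[e]> :&: <[x]>.
  rewrite inE; apply/andP; split; last by rewrite groupX ?mem_cycle.
  have -> : x ^+ (2 * i).+1 ^+ 2 = (e ^+ j ^+ 2)^-1.
    by apply/eqP; rewrite eq_mulgV1 invgK eq1.
  by rewrite groupV groupX ?mem_cycle.
rewrite triv => /set1P /eqP; rewrite -expgM -order_dvdn ox.
by clear; lia.
Qed.

Lemma gen4 w : w \in G -> w \in <[x]>.
Proof.
move=> Gw; apply/negPn/negP => wx.
have w1 : w != 1 by apply: contra wx => /eqP->; rewrite group1.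
case: (eqVneq (<[w]> :&: <[x]>) 1) => [triv|].
  exact: (claimA Gw w1).
move/trivgPn => [z]; rewrite inE => /andP[zw zx] z1.
have x2w : x ^+ 2 \in <[w]>.
  by apply: (subsetP _ _ (cyc4_sub zx z1)); rewrite cycle_subG.
case: (cG (_ : <[w]> \subset G) Gx x2w) => [|le|[h hw e]].
- by rewrite cycle_subG.
- have := card3 (group1 <[w]>) (cycle_id w) x2w.
  rewrite eq_sym w1 eq_sym x2n1.
  have -> : w != x ^+ 2 by apply: contraNneq wx => ->; rewrite mem_cycle.
  by move=> /(_ isT isT isT); rewrite ltnNge le.
have Gh : h \in G by apply: (subsetP _ _ hw); rewrite cycle_subG.
case: (boolP (x * h \in <[x]>)) => [yx|ynx].
  have xw : x \in <[w]>.
    case: (cyc4_inv yx e) => ey.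
      have -> : x = h^-1 by apply/eqP; rewrite -mulg_eq1 ey.
      by rewrite groupV.
    have -> : x = h by apply: (mulgI x); rewrite ey expg2.
    done.
  have : 4 %| #[w] by rewrite -ox cardSg // cycle_subG.
  move/(ord4 Gw) => ow.
  have : <[x]> == <[w]> by rewrite eqEcard cycle_subG xw /= -!orderE ox ow.
  by move/eqP => exw; move: wx; rewrite exw cycle_id.
apply: (claimA (groupM Gx Gh)).
  by apply: contra ynx => /eqP->; rewrite group1.
apply/eqP; rewrite eqEsubset sub1G andbT; apply/subsetP => z'.
rewrite inE => /andP[/cycleP[k ->] zy].
rewrite -(expg_mod k e) modn2 in zy *; case: (odd k) zy => /= zy.
  by rewrite ?expg1 zy in ynx.
by rewrite expg0 group1.
Qed.
End Four.

Lemma core p x y : x \in G -> y \in G ->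
  (forall z, z \in G -> ~~ (4 %| #[z])) ->
  #[[~ x, y]] = p -> prime p -> logn p #[x] <= logn p #[y] ->
  (forall x' y', x' \in G -> y' \in G -> (#[x'] * #[y'] < #[x] * #[y])%N ->
     [~ x', y'] = 1) -> False.
Proof.
move=> Gx Gy no4 oc pp hl IH.
have /setIP[cx cy] := comm_in Gx Gy.
set c := [~ x, y] in oc cx cy IH *.
have cxc : commute x c := commute_sym (commute_cyc cx).
have cyc : commute y c := commute_sym (commute_cyc2 cy (cycle_id y)).
have px : p %| #[x] by rewrite -oc; exact: order_dvdG cx.
have xp := order_gt0 x; have yp := order_gt0 y.
have p1 : 1 < p := prime_gt1 pp.
have [e xe] : {e | #[x] = (e * p)%N} by exists (#[x] %/ p); rewrite divnK.
have e0 : 0 < e by move: xp; rewrite xe muln_gt0 => /andP[].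
have oxe : #[x ^+ e] = p.
  rewrite orderXdiv; last by rewrite xe dvdn_mulr.
  by rewrite xe mulKn.
have sxe : <[x ^+ e]> = <[c]>.
  apply/eqP; rewrite (eq_subG_cyclic (cycle_cyclic x)) ?cycle_subG ?mem_cycle //.
  by apply/eqP; exact: (etrans oxe (esym oc)).
have xey : x ^+ e \in <[y]>.
  by apply: (subsetP (_ : <[c]> \subset <[y]>)); rewrite ?cycle_subG // -sxe cycle_id.
have ce : [~ x ^+ e, y] = c ^+ e := commXg e cxc.
have c1 : [~ x ^+ e, y] = 1 by apply/eqP/commgP; exact: commute_cyc xey.
case: (boolP (p %| e)) => pe; last first.
  by move: pe; rewrite -oc order_dvdn -ce c1 eqxx.
have p2 : p != 2.
  apply/negP => /eqP p2; move: (no4 x Gx); rewrite xe p2.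
  by rewrite A1 // -p2.
have cp2 : coprime p 2.
  rewrite prime_coprime //; apply: contra p2 => /(dvdn_leq (isT : 0 < 2)) le.
  exact: A2.
have pC : p %| 'C(e, 2).
  case: (boolP (odd e)) => oe; first by rewrite bin2odd // dvdn_mulr.
  have ee : (e./2 * 2)%N = e by rewrite muln2 -[RHS]odd_double_half (negPf oe).
  have -> : 'C(e, 2) = (e./2 * e.-1)%N.
    by rewrite bin2 -{1}ee muln2 -doubleMl half_double.
  by apply: dvdn_mulr; rewrite -(Gauss_dvdl _ cp2) ee.
have pye : p %| #[y ^+ e].
  rewrite orderXgcd; set g := gcdn #[y] e.
  have g0 : 0 < g by rewrite gcdn_gt0 yp.
  have gy : g %| #[y] := dvdn_gcdl _ _.
  have ge : g %| e := dvdn_gcdr _ _.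
  case: (boolP (p %| #[y] %/ g)) => // npq; exfalso.
  have : logn p #[y] <= logn p e.
    have yq : #[y] = (#[y] %/ g * g)%N by rewrite divnK.
    have q0 : 0 < #[y] %/ g by rewrite divn_gt0 // dvdn_leq.
    rewrite {1}yq lognM // logn_coprime ?add0n; last by rewrite prime_coprime.
    exact: dvdn_leq_log e0 ge.
  have : logn p #[x] = (logn p e).+1.
    by rewrite xe lognM ?(prime_gt0 pp) // (logn_prime _ pp) eqxx addn1.
  by move=> h1 h2; apply: (A3 h2 h1).
have [a ain oa] := Cauchy pp pye.
have ay : a \in <[y]>.
  by apply: (subsetP (_ : <[y ^+ e]> \subset <[y]>)); rewrite ?cycle_subG ?mem_cycle.
have ca : <[a]> = <[c]>.
  apply/eqP; rewrite (eq_subG_cyclic (cycle_cyclic y)) ?cycle_subG //.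
  by apply/eqP; exact: (etrans oa (esym oc)).
have cye : <[c]> \subset <[y ^+ e]> by rewrite -ca cycle_subG.
have : (x ^+ e)^-1 \in <[y ^+ e]>.
  by apply: (subsetP cye); rewrite groupV; move: (cycle_id (x ^+ e)); rewrite sxe.
case/cycleP => k ek.
set w := y ^+ k.
have Gw : w \in G by rewrite groupX.
have wy : w \in <[y]> := mem_cycle y k.
have we : w ^+ e = (x ^+ e)^-1 by rewrite /w -expgM mulnC expgM ek.
have cwx : [~ w, x] \in <[c]>.
  rewrite /w commXg; last first.
    by apply: commute_sym; apply: commute_cyc2 (cycle_id y); rewrite -invgR groupV.
  by rewrite -invgR groupX ?groupV ?cycle_id.
have cwx_x : [~ w, x] \in <[x]>.
  by apply: (subsetP (_ : <[c]> \subset <[x]>)); rewrite ?cycle_subG.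
have cwx_y : [~ w, x] \in <[y]>.
  by apply: (subsetP (_ : <[c]> \subset <[y]>)); rewrite ?cycle_subG.
have ve : (x * w) ^+ e = 1.
  rewrite expMg_Rmul; last first.
  - exact: commute_cyc2 (cycle_id x) cwx_x.
  - exact: commute_cyc2 wy cwx_y.
  rewrite we mulgV mul1g; apply/eqP; rewrite -order_dvdn.
  by apply: dvdn_trans pC; rewrite -oc; exact: order_dvdG cwx.
have ov : #[x * w] < #[x].
  have h1 : #[x * w] %| e by rewrite order_dvdn ve.
  have := dvdn_leq e0 h1.
  by move=> h; rewrite xe; apply: A5.
have := IH (x * w) y (groupM Gx Gw) Gy; rewrite ltn_pmul2r // => /(_ ov).
rewrite commMgJ.
have -> : [~ w, y] = 1 by apply/eqP/commgP; exact: commute_cyc2 wy (cycle_id y).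
have -> : c ^ w = c by apply/conjg_fixP/commgP; exact: commute_cyc2 cy wy.
rewrite mulg1 => c1'.
by move: p1; rewrite -oc c1' order1.
Qed.

Lemma abelG : (forall z, z \in G -> ~~ (4 %| #[z])) -> abelian G.
Proof.
move=> no4.
suff H : forall N x y, x \in G -> y \in G -> (#[x] * #[y] <= N)%N -> [~ x, y] = 1.
  apply/centsP => x Gx y Gy; apply/commgP.
  by rewrite (H _ x y Gx Gy (leqnn _)).
elim=> [|N IHN] x y Gx Gy le.
  by move: le; rewrite leqn0 muln_eq0 !eqn0Ngt !order_gt0.
case: (eqVneq [~ x, y] 1) => // nc; exfalso.
have /setIP[cx cy] := comm_in Gx Gy.
set c := [~ x, y] in nc cx cy *.
have cxc : commute x c := commute_sym (commute_cyc cx).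
have pp : prime (pdiv #[c]) by rewrite pdiv_prime // order_gt1.
set p := pdiv #[c] in pp.
have [n cn] : {n | #[c] = (n * p)%N} by exists (#[c] %/ p); rewrite divnK // pdiv_dvd.
have n0 : 0 < n by move: (order_gt0 c); rewrite cn muln_gt0 => /andP[].
have ocn : #[c ^+ n] = p.
  rewrite orderXdiv; last by rewrite cn dvdn_mulr.
  by rewrite cn mulKn.
have cxn : [~ x ^+ n, y] = c ^+ n := commXg n cxc.
have Gxn : x ^+ n \in G by rewrite groupX.
have lex : #[x ^+ n] <= #[x] := dvdn_leq (order_gt0 x) (orderXdvd x n).
have IH' : forall x' y', x' \in G -> y' \in G ->
    (#[x'] * #[y'] < #[x ^+ n] * #[y])%N -> [~ x', y'] = 1.
  move=> x' y' Gx' Gy' lt; apply: IHN => //.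
  have : (#[x ^+ n] * #[y] <= #[x] * #[y])%N by rewrite leq_mul2r lex orbT.
  by move=> h; rewrite -ltnS; apply: leq_trans lt (leq_trans h le).
case: (leqP (logn p #[x ^+ n]) (logn p #[y])) => hl.
  by apply: (core Gxn Gy no4 _ pp hl IH'); rewrite cxn.
apply: (core Gy Gxn no4 _ pp (ltnW hl)).
  by rewrite -invgR orderV cxn.
by move=> x' y' Gx' Gy'; rewrite [X in _ < X]mulnC; apply: IH'.
Qed.
End GT.


Lemma no4_struct (gT : finGroupType) (G : {group gT}) :
  abelian G -> (forall z, z \in G -> ~~ (4 %| #[z])) ->
  exists (t : nat) (qT : finGroupType) (Q : {group qT}),
    [/\ abelian Q, odd #|Q| & G \isog setX [set: 'rV['Z_2]_t] Q].
Proof.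
move=> abG no4.
have defG := nilpotent_pcoreC 2 (abelian_nil abG).
have abP : 2.-abelem 'O_2(G).
  apply: exponent2_abelem; apply/exponentP => z Pz.
  have Gz : z \in G := subsetP (pcore_sub _ _) z Pz.
  have := mem_p_elt (pcore_pgroup 2 G) Pz.
  case/p_natP => k ek; apply/eqP; rewrite -order_dvdn.
  move: (no4 z Gz); rewrite ek; case: k {ek} => [|[|k]] //.
  by rewrite !expnS mulnA dvdn_mulr.
exists (logn 2 #|'O_2(G)|), gT, 'O_2^'(G)%G; split.
- exact: abelianS (pcore_sub _ _) abG.
- by rewrite odd_2'nat; exact: pcore_pgroup.
apply: (isog_dprod defG (setX_dprod [set: 'rV['Z_2]_(logn 2 #|'O_2(G)|)]%G _)).
  apply: isog_trans (isog_setX1 _ _).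
  rewrite (isog_abelem_card _ abP) exponent2_abelem ?rV2_exp //=.
  by rewrite cardsT card_mx card_ord mul1n -card_pgroup // pcore_pgroup.
exact: isog_set1X.
Qed.

Lemma gt_main (gT : finGroupType) (G : {group gT}) :
  dedekind G -> (forall H : {group gT}, H \subset G -> cond G H) ->
  (G \isog Zp 4
      \/ exists (t : nat) (qT : finGroupType) (Q : {group qT}),
           [/\ abelian Q, odd #|Q| & G \isog setX [set: 'rV['Z_2]_t] Q]).
Proof.
move=> dG cG.
case: (boolP [exists x in G, #[x] == 4]) => [/exists_inP[x Gx /eqP ox]|n4].
  left; have GE : G :=: <[x]>.
    apply/eqP; rewrite eqEsubset cycle_subG Gx andbT; apply/subsetP => w.
    move=> Gw; exact: (gen4 dG cG Gx ox Gw).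
  rewrite GE (isog_cyclic_card _ (cycle_cyclic x)) card_Zp // -orderE ox eqxx andbT.
  have cZ : cyclic (Zp 4) by rewrite /Zp /= Zp_cycle cycle_cyclic.
  exact: cZ.
right; apply: no4_struct.
  apply: abelG dG _ => z Gz; apply/negP => /(ord4 cG Gz) oz.
  by move/exists_inP: n4; apply; exists z; rewrite // oz.
move=> z Gz; apply/negP => /(ord4 cG Gz) oz.
by move/exists_inP: n4; apply; exists z; rewrite // oz.
Qed.

Unset Implicit Arguments.

Theorem theorem4p5 (gT : finGroupType) (G : {group gT}) :
  dedekind G ->
  (code_perfect G <->
     (G \isog Zp 4
      \/ exists (t : nat) (qT : finGroupType) (Q : {group qT}),
           [/\ abelian Q, odd #|Q| & G \isog setX [set: 'rV['Z_2]_t] Q])).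
Proof.
move=> dG; split.
  move=> cp; apply: (gt_main dG) => H sHG.
  have nHG := dG H sHG; have [C0 pc] := cp H nHG.
  exact: nec_cond nHG pc.
move=> h H nHG; apply: (suff_code nHG).
case: h => [iso|[t [qT [Q [abQ oQ iso]]]]].
  by apply: cond_4 (normal_sub nHG); rewrite (card_isog iso) card_Zp.
exact: cond_exp oQ (transfer_X oQ iso).
Qed.
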